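(* Fix an attacker label $A\in\mathcal{L}$. For all partial bijections $\beta$, all initial configurations $c_1,c_2$ of $\lambda^{dCG}$ extended with flow-sensitive references (either both of the form $\langle\Sigma,\mu,pc,e\rangle$ evaluated by the forcing semantics or both of the form $\langle\Sigma,\mu,pc,t\rangle$ evaluated by the thunk semantics) and environments $\theta_1,\theta_2$ with $\vdash\mathbf{Valid}(c_1,\theta_1)$, $\vdash\mathbf{Valid}(c_2,\theta_2)$, $c_1\approx^\beta_A c_2$ and $\theta_1\approx^\beta_A\theta_2$: if $c_1\Downarrow^{\theta_1}c_1'$ and $c_2\Downarrow^{\theta_2}c_2'$, then there exists a partial bijection $\beta'\supseteq\beta$ such that $c_1'\approx^{\beta'}_A c_2'$.
   Context: Fix a lattice $(\mathcal{L},\sqsubseteq,\sqcup)$ of labels. The calculus has types $\tau::=\mathbf{unit}\mid\tau_1\to\tau_2\mid\tau_1+\tau_2\mid\tau_1\times\tau_2\mid\mathcal{L}\mid\mathbf{LIO}\,\tau\mid\mathbf{Labeled}\,\tau\mid\mathbf{Ref}\,s\,\tau$, $s\in\{I,S\}$ (standard simple typing; the tag $s$ determines which reference rules apply), values $v::=()\mid(x.e,\theta)\mid\mathbf{inl}(v)\mid\mathbf{inr}(v)\mid(v_1,v_2)\mid\ell\mid\mathbf{Labeled}\,\ell\,v\mid(t,\theta)\mid n_\ell\mid n$ ($n_\ell$ flow-insensitive reference into memory $\ell$, $n$ flow-sensitive heap address), expressions $e::=x\mid\lambda x.e\mid e_1\,e_2\mid()\mid\ell\mid(e_1,e_2)\mid\mathbf{fst}(e)\mid\mathbf{snd}(e)\mid\mathbf{inl}(e)\mid\mathbf{inr}(e)\mid\mathbf{case}(e,x.e_1,x.e_2)\mid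 e_1\sqsubseteq^{?}e_2\mid t$, thunks $t::=\mathbf{return}(e)\mid\mathbf{bind}(e,x.e)\mid\mathbf{unlabel}(e)\mid\mathbf{toLabeled}(e)\mid\mathbf{labelOf}(e)\mid\mathbf{getLabel}\mid\mathbf{taint}(e)\mid\mathbf{new}(e)\mid\,!e\mid e_1:=e_2\mid\mathbf{labelOfRef}(e)$; environments are finite maps from variables to values. Memories are lists of values, a store $\Sigma$ maps each label to a memory, a heap $\mu$ is a list of values of the form $\mathbf{Labeled}\,\ell\,v$; $|X|$, $X[n]$, $X[n\mapsto y]$ denote length, $n$-th entry (from 0), replacement (append if $n=|X|$). Pure semantics $e\Downarrow^\theta v$: $x\Downarrow\theta(x)$; $()\Downarrow()$; $\ell\Downarrow\ell$; $\lambda x.e\Downarrow(x.e,\theta)$; $t\Downarrow(t,\theta)$; $e_1\,e_2\Downarrow v$ if $e_1\Downarrow^\theta(x.e,\theta')$, $e_2\Downarrow^\theta v_2$, $e\Downarrow^{\theta'[x\mapsto v_2]}v$; pairs, projections, injections componentwise; $\mathbf{case}(e,x.e_1,x.e_2)\Downarrow v$ if $e\Downarrow\mathbf{inl}(v_1)$ and $e_1\Downarrow^{\theta[x\mapsto v_1]}v$, or $e\Downarrow\mathbf{inr}(v_2)$ and $e_2\Downarrow^{\theta[x\mapsto v_2]}v$; $e_1\sqsubseteq^?e_2$ evaluates both to labels $\ell_1,\ell_2$ and yields $\mathbf{inl}(())$ if $\ell_1\sqsubseteq\ell_2$, else $\mathbf{inr}(())$. Forcing semantics: $\langle\Sigma,\mu,pc,e\rangle\Downarrow^\theta\langle\Sigma',\mu',pc',v\rangle$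 iff $e\Downarrow^\theta(t,\theta')$ and $\langle\Sigma,\mu,pc,t\rangle\Downarrow^{\theta'}\langle\Sigma',\mu',pc',v\rangle$. Thunk semantics (store/heap unchanged unless stated): (Return) $e\Downarrow^\theta v$ gives $\langle\Sigma,\mu,pc,v\rangle$. (Bind) forcing $e_1$ from $\langle\Sigma,\mu,pc\rangle$ gives $\langle\Sigma',\mu',pc',v_1\rangle$, forcing $e_2$ in $\theta[x\mapsto v_1]$ from $\langle\Sigma',\mu',pc'\rangle$ gives the result. (ToLabeled) forcing $e$ gives $\langle\Sigma',\mu',pc',v\rangle$; result $\langle\Sigma',\mu',pc,\mathbf{Labeled}\,pc'\,v\rangle$. (Unlabel) $e\Downarrow\mathbf{Labeled}\,\ell\,v$; result $\langle\Sigma,\mu,pc\sqcup\ell,v\rangle$. (LabelOf) $e\Downarrow\mathbf{Labeled}\,\ell\,v$; result $\langle\Sigma,\mu,pc\sqcup\ell,\ell\rangle$. (GetLabel) $\langle\Sigma,\mu,pc,pc\rangle$. (Taint) $e\Downarrow\ell$; result $\langle\Sigma,\mu,pc\sqcup\ell,()\rangle$. For $\mathbf{Ref}\,I$: (New) $e\Downarrow\mathbf{Labeled}\,\ell\,v$, $pc\sqsubseteq\ell$, $n=|\Sigma(\ell)|$: result $n_\ell$ with store $\Sigma[\ell\mapsto\Sigma(\ell)[n\mapsto v]]$; (Read) $e\Downarrow n_\ell$, $\Sigma(\ell)[n]=v$: result $\langle\Sigma,\mu,pc\sqcup\ell,v\rangle$; (Write) $e_1\Downarrow n_{\ell_1}$,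 $e_2\Downarrow\mathbf{Labeled}\,\ell_2\,v$, $\ell_2\sqsubseteq\ell_1$, $pc\sqsubseteq\ell_1$: result $()$ with store $\Sigma[\ell_1\mapsto\Sigma(\ell_1)[n\mapsto v]]$; (LabelOfRef) $e\Downarrow n_\ell$: result $\langle\Sigma,\mu,pc\sqcup\ell,\ell\rangle$. For $\mathbf{Ref}\,S$: (New-FS) $e\Downarrow\mathbf{Labeled}\,\ell\,v$, $pc\sqsubseteq\ell$, $n=|\mu|$: result $n$ with heap $\mu[n\mapsto\mathbf{Labeled}\,\ell\,v]$; (Read-FS) $e\Downarrow n$, $\mu[n]=\mathbf{Labeled}\,\ell\,v$: result $\langle\Sigma,\mu,pc\sqcup\ell,v\rangle$; (LabelOfRef-FS) $e\Downarrow n$, $\mu[n]=\mathbf{Labeled}\,\ell\,v$: result $\langle\Sigma,\mu,pc\sqcup\ell,\ell\rangle$; (Write-FS) $e_1\Downarrow n$, $e_2\Downarrow\mathbf{Labeled}\,\ell'\,v$, $\mu[n]=\mathbf{Labeled}\,\ell\,v_0$, $pc\sqsubseteq\ell$: result $()$ with heap $\mu[n\mapsto\mathbf{Labeled}\,(pc\sqcup\ell')\,v]$. Final configurations are $\langle\Sigma,\mu,pc,v\rangle$. A partial bijection is a finite injective partial function $\beta:\mathbb N\rightharpoonup\mathbb N$; $\beta\subseteq\beta'$ is inclusion of graphs. $A$-equivalence up to $\beta$ on values: $\mathbf{Labeled}\,\ell\,v_1\approx^\beta_A\mathbf{Labeled}\,\ell\,v_2$ if $\ell\sqsubseteq A$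 and $v_1\approx^\beta_A v_2$; $\mathbf{Labeled}\,\ell_1\,v_1\approx^\beta_A\mathbf{Labeled}\,\ell_2\,v_2$ if $\ell_1,\ell_2\not\sqsubseteq A$; $()$, labels: equal; injections and pairs homomorphically; function and thunk closures related if bodies are $\alpha$-equivalent and environments are related (same domain, pointwise); $n_\ell\approx n_\ell$ if $\ell\sqsubseteq A$; $(n_1)_{\ell_1}\approx(n_2)_{\ell_2}$ if $\ell_1,\ell_2\not\sqsubseteq A$; heap addresses $n_1\approx^\beta_A n_2$ iff $\beta(n_1)=n_2$. Memories at label $\ell$: always related if $\ell\not\sqsubseteq A$, else same length and pointwise related; stores pointwise. Heaps: $\mu_1\approx^\beta_A\mu_2$ iff $\mathrm{dom}(\beta)\subseteq\{0,\dots,|\mu_1|-1\}$, $\mathrm{rng}(\beta)\subseteq\{0,\dots,|\mu_2|-1\}$, and $\mu_1[n_1]\approx^\beta_A\mu_2[n_2]$ whenever $\beta(n_1)=n_2$. Initial configurations related iff stores and heaps related up to $\beta$, program counters equal, and expressions (resp. thunks) $\alpha$-equivalent. Final configurations $\langle\Sigma_1,\mu_1,pc_1,v_1\rangle\approx^\beta_A\langle\Sigma_2,\mu_2,pc_2,v_2\rangle$ iff stores and heaps are related up to $\beta$ and either $pc_1,pc_2\not\sqsubseteq A$, or $pc_1=pc_2\sqsubseteq A$ and $v_1\approx^\beta_A v_2$. Validity: $n\vdash\mathbf{Valid}(x)$ means every flow-sensitive heap address occurring in $x$ (including inside closures' environments and labeled values) is $<n$. $\vdash\mathbf{Valid}(\langle\Sigma,\mu,pc,e\rangle,\theta)$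 (likewise with a thunk) iff with $n=|\mu|$: $n\vdash\mathbf{Valid}(\Sigma)$, $n\vdash\mathbf{Valid}(\mu)$, $n\vdash\mathbf{Valid}(\theta)$. *)

(* Defs.v *)
(* Calculus lambda^{dCG} with flow-insensitive (Ref I) and
   flow-sensitive (Ref S) references; de Bruijn indices for variables. *)
From Stdlib Require List.
From HB Require Import structures.
From mathcomp Require Import all_boot all_order.
Set Implicit Arguments. Unset Strict Implicit. Unset Printing Implicit Defensive.
Import Order.LTheory.
Local Open Scope order_scope.

Section DCG.
Context {d : Order.disp_t} {L : latticeType d}.

Inductive reftag := RI | RS.

(* Expressions and thunks; variables are de Bruijn indices, so
   alpha-equivalence is syntactic equality. *)
Inductive expr : Type :=
| Var (x : nat)
| Lam (e : expr)
| App (e1 e2 : expr)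
| EUnit
| ELbl (l : L)
| EPair (e1 e2 : expr)
| Fst (e : expr)
| Snd (e : expr)
| EInl (e : expr)
| EInr (e : expr)
| Case (e e1 e2 : expr)              (* case(e, x.e1, x.e2) *)
| LeqQ (e1 e2 : expr)
| EThunk (t : thunk)
with thunk : Type :=
| Return (e : expr)
| Bind (e1 e2 : expr)                (* bind(e1, x.e2) *)
| Unlabel (e : expr)
| ToLabeled (e : expr)
| LabelOf (e : expr)
| GetLabel
| Taint (e : expr)
| New (s : reftag) (e : expr)
| Read (e : expr)
| Write (e1 e2 : expr)
| LabelOfRef (e : expr).

Inductive value : Type :=
| VUnit
| VClos (e : expr) (th : list value)
| VInl (v : value)
| VInr (v : value)
| VPair (v1 v2 : value)
| VLbl (l : L)
| VLabeled (l : L) (v : value)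
| VThunk (t : thunk) (th : list value)
| VRefI (n : nat) (l : L)
| VRefS (n : nat).

Definition env := list value.
Definition memory := list value.
Definition store := L -> memory.
Definition heap := list value.

(* X[n |-> y]: replacement, append when n = |X| (only used with n <= |X|) *)
Definition upd {T : Type} (X : list T) (n : nat) (y : T) : list T :=
  if (n < size X)%N then set_nth y X n y else rcons X y.

Definition supd (S : store) (l : L) (M : memory) : store :=
  fun l' => if l' == l then M else S l'.

Inductive eval (th : env) : expr -> value -> Prop :=
| EvVar x v : List.nth_error th x = Some v -> eval th (Var x) v
| EvUnit : eval th EUnit VUnit
| EvLbl l : eval th (ELbl l) (VLbl l)
| EvLam e : eval th (Lam e) (VClos e th)
| EvThunk t : eval th (EThunk t) (VThunk t th)
| EvApp e1 e2 e th' v2 v :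
    eval th e1 (VClos e th') -> eval th e2 v2 -> eval (v2 :: th') e v ->
    eval th (App e1 e2) v
| EvPair e1 e2 v1 v2 : eval th e1 v1 -> eval th e2 v2 -> eval th (EPair e1 e2) (VPair v1 v2)
| EvFst e v1 v2 : eval th e (VPair v1 v2) -> eval th (Fst e) v1
| EvSnd e v1 v2 : eval th e (VPair v1 v2) -> eval th (Snd e) v2
| EvInl e v : eval th e v -> eval th (EInl e) (VInl v)
| EvInr e v : eval th e v -> eval th (EInr e) (VInr v)
| EvCaseL e e1 e2 v1 v :
    eval th e (VInl v1) -> eval (v1 :: th) e1 v -> eval th (Case e e1 e2) v
| EvCaseR e e1 e2 v2 v :
    eval th e (VInr v2) -> eval (v2 :: th) e2 v -> eval th (Case e e1 e2) v
| EvLeqQ e1 e2 l1 l2 :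
    eval th e1 (VLbl l1) -> eval th e2 (VLbl l2) ->
    eval th (LeqQ e1 e2) (if l1 <= l2 then VInl VUnit else VInr VUnit).

Record cfg (X : Type) := Cfg { c_store : store; c_heap : heap; c_pc : L; c_term : X }.

Inductive force : cfg expr -> env -> cfg value -> Prop :=
| Force S m pc e th t th' c' :
    eval th e (VThunk t th') -> teval (Cfg S m pc t) th' c' ->
    force (Cfg S m pc e) th c'
with teval : cfg thunk -> env -> cfg value -> Prop :=
| TReturn S m pc e th v :
    eval th e v -> teval (Cfg S m pc (Return e)) th (Cfg S m pc v)
| TBind S m pc e1 e2 th S' m' pc' v1 c :
    force (Cfg S m pc e1) th (Cfg S' m' pc' v1) ->
    force (Cfg S' m' pc' e2) (v1 :: th) c ->
    teval (Cfg S m pc (Bind e1 e2)) th c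
| TToLabeled S m pc e th S' m' pc' v :
    force (Cfg S m pc e) th (Cfg S' m' pc' v) ->
    teval (Cfg S m pc (ToLabeled e)) th (Cfg S' m' pc (VLabeled pc' v))
| TUnlabel S m pc e th l v :
    eval th e (VLabeled l v) ->
    teval (Cfg S m pc (Unlabel e)) th (Cfg S m (pc `|` l) v)
| TLabelOf S m pc e th l v :
    eval th e (VLabeled l v) ->
    teval (Cfg S m pc (LabelOf e)) th (Cfg S m (pc `|` l) (VLbl l))
| TGetLabel S m pc th :
    teval (Cfg S m pc GetLabel) th (Cfg S m pc (VLbl pc))
| TTaint S m pc e th l :
    eval th e (VLbl l) ->
    teval (Cfg S m pc (Taint e)) th (Cfg S m (pc `|` l) VUnit)
| TNew S m pc e th l v :
    eval th e (VLabeled l v) -> pc <= l ->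
    teval (Cfg S m pc (New RI e)) th
          (Cfg (supd S l (upd (S l) (size (S l)) v)) m pc (VRefI (size (S l)) l))
| TRead S m pc e th n l v :
    eval th e (VRefI n l) -> List.nth_error (S l) n = Some v ->
    teval (Cfg S m pc (Read e)) th (Cfg S m (pc `|` l) v)
| TWrite S m pc e1 e2 th n l1 l2 v :
    eval th e1 (VRefI n l1) -> eval th e2 (VLabeled l2 v) ->
    l2 <= l1 -> pc <= l1 -> (n <= size (S l1))%N ->
    teval (Cfg S m pc (Write e1 e2)) th
          (Cfg (supd S l1 (upd (S l1) n v)) m pc VUnit)
| TLabelOfRef S m pc e th n l :
    eval th e (VRefI n l) ->
    teval (Cfg S m pc (LabelOfRef e)) th (Cfg S m (pc `|` l) (VLbl l))
| TNewFS S m pc e th l v :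
    eval th e (VLabeled l v) -> pc <= l ->
    teval (Cfg S m pc (New RS e)) th
          (Cfg S (upd m (size m) (VLabeled l v)) pc (VRefS (size m)))
| TReadFS S m pc e th n l v :
    eval th e (VRefS n) -> List.nth_error m n = Some (VLabeled l v) ->
    teval (Cfg S m pc (Read e)) th (Cfg S m (pc `|` l) v)
| TLabelOfRefFS S m pc e th n l v :
    eval th e (VRefS n) -> List.nth_error m n = Some (VLabeled l v) ->
    teval (Cfg S m pc (LabelOfRef e)) th (Cfg S m (pc `|` l) (VLbl l))
| TWriteFS S m pc e1 e2 th n l' v l v0 :
    eval th e1 (VRefS n) -> eval th e2 (VLabeled l' v) ->
    List.nth_error m n = Some (VLabeled l v0) -> pc <= l ->
    teval (Cfg S m pc (Write e1 e2)) th
          (Cfg S (upd m n (VLabeled (pc `|` l') v)) pc VUnit).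

Definition pbij := nat -> option nat.
Definition is_pbij (b : pbij) : Prop :=
  (forall n1 n2 k, b n1 = Some k -> b n2 = Some k -> n1 = n2) /\
  (exists N, forall n, (N <= n)%N -> b n = None).
Definition pbij_incl (b b' : pbij) : Prop :=
  forall n k, b n = Some k -> b' n = Some k.

Inductive val_rel (b : pbij) (A : L) : value -> value -> Prop :=
| RLabeledLow l v1 v2 : l <= A -> val_rel b A v1 v2 ->
    val_rel b A (VLabeled l v1) (VLabeled l v2)
| RLabeledHigh l1 l2 v1 v2 : ~~ (l1 <= A) -> ~~ (l2 <= A) ->
    val_rel b A (VLabeled l1 v1) (VLabeled l2 v2)
| RUnit : val_rel b A VUnit VUnit
| RLbl l : val_rel b A (VLbl l) (VLbl l)
| RInl v1 v2 : val_rel b A v1 v2 -> val_rel b A (VInl v1) (VInl v2)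
| RInr v1 v2 : val_rel b A v1 v2 -> val_rel b A (VInr v1) (VInr v2)
| RPair v1 v2 w1 w2 : val_rel b A v1 v2 -> val_rel b A w1 w2 ->
    val_rel b A (VPair v1 w1) (VPair v2 w2)
| RClos e th1 th2 : List.Forall2 (val_rel b A) th1 th2 ->
    val_rel b A (VClos e th1) (VClos e th2)
| RThunk t th1 th2 : List.Forall2 (val_rel b A) th1 th2 ->
    val_rel b A (VThunk t th1) (VThunk t th2)
| RRefILow n l : l <= A -> val_rel b A (VRefI n l) (VRefI n l)
| RRefIHigh n1 n2 l1 l2 : ~~ (l1 <= A) -> ~~ (l2 <= A) ->
    val_rel b A (VRefI n1 l1) (VRefI n2 l2)
| RRefS n1 n2 : b n1 = Some n2 -> val_rel b A (VRefS n1) (VRefS n2).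

Definition env_rel (b : pbij) (A : L) (th1 th2 : env) : Prop :=
  List.Forall2 (val_rel b A) th1 th2.

Definition mem_rel (b : pbij) (A : L) (l : L) (M1 M2 : memory) : Prop :=
  l <= A -> List.Forall2 (val_rel b A) M1 M2.

Definition store_rel (b : pbij) (A : L) (S1 S2 : store) : Prop :=
  forall l, mem_rel b A l (S1 l) (S2 l).

Definition heap_rel (b : pbij) (A : L) (m1 m2 : heap) : Prop :=
  (forall n k, b n = Some k -> (n < size m1)%N) /\
  (forall n k, b n = Some k -> (k < size m2)%N) /\
  (forall n k, b n = Some k -> val_rel b A (nth VUnit m1 n) (nth VUnit m2 k)).

Definition init_rel {X : Type} (b : pbij) (A : L) (c1 c2 : cfg X) : Prop :=
  store_rel b A (c_store c1) (c_store c2) /\ heap_rel b A (c_heap c1) (c_heap c2) /\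
  c_pc c1 = c_pc c2 /\ c_term c1 = c_term c2.

Definition final_rel (b : pbij) (A : L) (c1 c2 : cfg value) : Prop :=
  store_rel b A (c_store c1) (c_store c2) /\ heap_rel b A (c_heap c1) (c_heap c2) /\
  ((~~ (c_pc c1 <= A) /\ ~~ (c_pc c2 <= A)) \/
   (c_pc c1 = c_pc c2 /\ c_pc c1 <= A /\ val_rel b A (c_term c1) (c_term c2))).

Inductive valid_val (n : nat) : value -> Prop :=
| VdUnit : valid_val n VUnit
| VdClos e th : List.Forall (valid_val n) th -> valid_val n (VClos e th)
| VdInl v : valid_val n v -> valid_val n (VInl v)
| VdInr v : valid_val n v -> valid_val n (VInr v)
| VdPair v1 v2 : valid_val n v1 -> valid_val n v2 -> valid_val n (VPair v1 v2)
| VdLbl l : valid_val n (VLbl l)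
| VdLabeled l v : valid_val n v -> valid_val n (VLabeled l v)
| VdThunk t th : List.Forall (valid_val n) th -> valid_val n (VThunk t th)
| VdRefI k l : valid_val n (VRefI k l)
| VdRefS k : (k < n)%N -> valid_val n (VRefS k).

Definition valid_cfg {X : Type} (c : cfg X) (th : env) : Prop :=
  let n := size (c_heap c) in
  (forall l, List.Forall (valid_val n) (c_store c l)) /\
  List.Forall (valid_val n) (c_heap c) /\
  List.Forall (valid_val n) th.

End DCG.

(* Main.v *)
Require Import Defs.
From mathcomp Require Import all_boot all_order.
From Stdlib Require List.
Set Implicit Arguments. Unset Strict Implicit.
Import Order.LTheory.
Local Open Scope order_scope.

Scheme force_ind2 := Induction for force Sort Prop
  with teval_ind2 := Induction for teval Sort Prop.
Combined Scheme ft_ind from force_ind2, teval_ind2.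

Section Proofs.
Context {d : Order.disp_t} {L : latticeType d} (A : L).

Lemma F2_nth_error {T U : Type} (R : T -> U -> Prop) l1 l2 n x :
  List.Forall2 R l1 l2 -> List.nth_error l1 n = Some x ->
  exists y, List.nth_error l2 n = Some y /\ R x y.
Proof.
  intros H; revert n; induction H; intros [|n]; simpl; try discriminate.
  - intros [= <-]; eauto.
  - apply IHForall2.
Qed.

Lemma F2_size {T U : Type} (R : T -> U -> Prop) l1 l2 :
  List.Forall2 R l1 l2 -> size l1 = size l2.
Proof. induction 1; simpl; congruence. Qed.

Lemma F2_set_nth {T U : Type} (R : T -> U -> Prop) X Y n x y :
  List.Forall2 R X Y -> R x y -> (n < size X)%N ->
  List.Forall2 R (set_nth x X n x) (set_nth y Y n y).
Proof.
  intros H; revert n; induction H; intros [|n] Hr Hn; simpl in *; try discriminate.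
  - constructor; auto.
  - constructor; auto.
Qed.

Lemma F2_rcons {T U : Type} (R : T -> U -> Prop) X Y x y :
  List.Forall2 R X Y -> R x y -> List.Forall2 R (rcons X x) (rcons Y y).
Proof. induction 1; simpl; intros; constructor; auto. Qed.

Lemma F2_upd {T U : Type} (R : T -> U -> Prop) X Y n x y :
  List.Forall2 R X Y -> R x y -> List.Forall2 R (upd X n x) (upd Y n y).
Proof.
  intros H Hr; unfold upd; rewrite -(F2_size H).
  case: ifP => Hn; [apply F2_set_nth|apply F2_rcons]; auto.
Qed.

Lemma nth_error_nth {T : Type} (s : seq T) n x dd :
  List.nth_error s n = Some x -> nth dd s n = x /\ (n < size s)%N.
Proof.
  revert n; induction s as [|a s IH]; intros [|n]; simpl; try discriminate.
  - intros [= ->]; auto.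
  - apply IH.
Qed.

Lemma nth_set_nth' {T : Type} (s : seq T) n m y dd :
  (n < size s)%N -> nth dd (set_nth y s n y) m = if m == n then y else nth dd s m.
Proof.
  revert n m; induction s as [|a s IH]; intros [|n] [|m]; simpl; try discriminate; auto.
  intros Hn. rewrite IH //.
Qed.

Fixpoint val_rel_mono (b b' : pbij) (Hi : pbij_incl b b') v1 v2
  (r : val_rel b A v1 v2) {struct r} : val_rel b' A v1 v2 :=
  match r in val_rel _ _ v1 v2 return val_rel b' A v1 v2 with
  | RLabeledLow l v1 v2 h r => RLabeledLow h (val_rel_mono Hi r)
  | RLabeledHigh l1 l2 v1 v2 h1 h2 => RLabeledHigh b' v1 v2 h1 h2
  | RUnit => RUnit b' A
  | RLbl l => RLbl b' A l
  | RInl _ _ r => RInl (val_rel_mono Hi r)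
  | RInr _ _ r => RInr (val_rel_mono Hi r)
  | RPair _ _ _ _ r1 r2 => RPair (val_rel_mono Hi r1) (val_rel_mono Hi r2)
  | RClos e th1 th2 F => RClos e
      ((fix go l1 l2 (F : List.Forall2 (val_rel b A) l1 l2) :
          List.Forall2 (val_rel b' A) l1 l2 :=
        match F with
        | List.Forall2_nil => List.Forall2_nil _
        | List.Forall2_cons x y l1 l2 h t =>
            List.Forall2_cons x y (val_rel_mono Hi h) (go l1 l2 t)
        end) th1 th2 F)
  | RThunk t th1 th2 F => RThunk t
      ((fix go l1 l2 (F : List.Forall2 (val_rel b A) l1 l2) :
          List.Forall2 (val_rel b' A) l1 l2 :=
        match F with
        | List.Forall2_nil => List.Forall2_nil _
        | List.Forall2_cons x y l1 l2 h t =>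
            List.Forall2_cons x y (val_rel_mono Hi h) (go l1 l2 t)
        end) th1 th2 F)
  | RRefILow n l h => RRefILow b' n h
  | RRefIHigh n1 n2 l1 l2 h1 h2 => RRefIHigh b' n1 n2 h1 h2
  | RRefS n1 n2 h => RRefS A (Hi _ _ h)
  end.

Lemma env_rel_mono b b' th1 th2 : pbij_incl b b' -> env_rel b A th1 th2 -> env_rel b' A th1 th2.
Proof. intros Hi H; unfold env_rel in *; induction H; constructor; auto. exact: val_rel_mono H. Qed.

Lemma store_rel_mono b b' S1 S2 : pbij_incl b b' -> store_rel b A S1 S2 -> store_rel b' A S1 S2.
Proof. intros Hi H l Hl. exact: env_rel_mono (H l Hl). Qed.

Ltac useIH Hth := repeat match goal with
 | IH : forall th2 v2, env_rel ?b ?A ?t th2 -> eval th2 ?e v2 -> val_rel _ _ ?x v2,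
   H : eval ?t2 ?e ?w |- _ =>
   let Hc := fresh "Hc" in have Hc : val_rel b A x w := IH _ _ Hth H; clear IH
 end.

Ltac inv_rel := repeat match goal with
 | H : val_rel _ _ ?x ?y |- _ => tryif is_var x then fail else (inversion H; subst; clear H)
 end.

Lemma eval_rel b th1 e v1 : eval th1 e v1 -> forall th2 v2,
  env_rel b A th1 th2 -> eval th2 e v2 -> val_rel b A v1 v2.
Proof.
  induction 1; intros th2 w Hth H2; inversion H2; subst; useIH Hth; inv_rel.
  - destruct (F2_nth_error Hth H) as [y [Hy Hr]]. congruence.
  all: try solve [constructor; auto].
  all: try solve [eapply IHeval3; [constructor; eassumption | eassumption]].
  all: try solve [eapply IHeval2; [constructor; eassumption | eassumption]].
  all: try solve [case: ifP; constructor; constructor].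
  all: assumption.
Qed.

Definition is_high (v : value) : Prop := exists l w, v = VLabeled l w /\ ~~ (l <= A).
Definition confined (S S' : store) (m m' : heap) : Prop :=
  (forall l, l <= A -> S' l = S l) /\ (size m <= size m')%N /\
  (forall n, (n < size m)%N -> nth VUnit m' n = nth VUnit m n \/
     (is_high (nth VUnit m n) /\ is_high (nth VUnit m' n))).

Lemma conf_refl S m : confined S S m m.
Proof. split; [|split]; auto. Qed.

Lemma conf_trans S S' S'' m m' m'' :
  confined S S' m m' -> confined S' S'' m' m'' -> confined S S'' m m''.
Proof.
  intros [a1 [b1 c1]] [a2 [b2 c2]]; split; [|split].
  - intros l Hl; rewrite a2 // a1 //.
  - exact: leq_trans b1 b2.
  - intros n Hn. have Hn' : (n < size m')%N by exact: leq_trans Hn b1.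
    destruct (c1 n Hn) as [E1|[H1 H1']]; destruct (c2 n Hn') as [E2|[H2 H2']].
    + left; congruence.
    + right; split; congruence.
    + right; split; congruence.
    + right; split; auto.
Qed.

Lemma high_join pc l : ~~ (pc <= A) -> ~~ (pc `|` l <= A).
Proof. by rewrite leUx negb_and => ->. Qed.

Lemma high_join_r pc l : ~~ (l <= A) -> ~~ (pc `|` l <= A).
Proof. by rewrite leUx negb_and => ->; rewrite orbT. Qed.

Lemma high_le pc l : pc <= l -> ~~ (pc <= A) -> ~~ (l <= A).
Proof. intros H; apply: contra => H2. exact: le_trans H H2. Qed.

Lemma conf_supd S l M m : ~~ (l <= A) -> confined S (supd S l M) m m.
Proof.
  intros Hl; split; [|split]; auto.
  intros l' Hl'; unfold supd; case: eqP => // E; subst. by rewrite Hl' in Hl.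
Qed.

Lemma conf_rcons S m x : confined S S m (upd m (size m) x).
Proof.
  unfold upd; rewrite ltnn; split; [|split]; auto.
  - by rewrite size_rcons.
  - intros n Hn; left; by rewrite nth_rcons Hn.
Qed.

Lemma conf_write S m n l v0 l2 v : List.nth_error m n = Some (VLabeled l v0) ->
  ~~ (l <= A) -> ~~ (l2 <= A) -> confined S S m (upd m n (VLabeled l2 v)).
Proof.
  intros He Hl Hl2. destruct (nth_error_nth VUnit He) as [E Hn].
  unfold upd; rewrite Hn; split; [|split]; auto.
  - rewrite size_set_nth; exact: leq_maxr.
  - intros k Hk; rewrite nth_set_nth' //. case: eqP => Ek; [subst|left; auto].
    right; rewrite E; split; do 2 eexists; split; eauto.
Qed.

Lemma confine :
  (forall c th c', force c th c' -> ~~ (c_pc c <= A) ->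
     ~~ (c_pc c' <= A) /\ confined (c_store c) (c_store c') (c_heap c) (c_heap c')) /\
  (forall c th c', teval c th c' -> ~~ (c_pc c <= A) ->
     ~~ (c_pc c' <= A) /\ confined (c_store c) (c_store c') (c_heap c) (c_heap c')).
Proof.
  apply ft_ind; simpl; intros.
  - auto.
  - split; auto using conf_refl.
  - destruct (H H1) as [Hp1 C1]; destruct (H0 Hp1) as [Hp2 C2]; split; eauto using conf_trans.
  - destruct (H H0) as [Hp1 C1]; split; auto.
  - split; auto using conf_refl, high_join.
  - split; auto using conf_refl, high_join.
  - split; auto using conf_refl.
  - split; auto using conf_refl, high_join.
  - split; auto. apply conf_supd. exact: high_le i H.
  - split; auto using conf_refl, high_join.
  - split; auto. apply conf_supd. exact: high_le i0 H.
  - split; auto using conf_refl, high_join.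
  - split; auto using conf_rcons.
  - split; auto using conf_refl, high_join.
  - split; auto using conf_refl, high_join.
  - split; auto. apply: conf_write e3 _ _. exact: high_le i H. exact: high_join.
Qed.

Lemma high_rel_l b x y : val_rel b A x y -> is_high y -> is_high x.
Proof.
  intros H [l [w [-> Hl]]]; inversion H; subst.
  - match goal with Hx : is_true (_ <= A) |- _ => by rewrite Hx in Hl end.
  - do 2 eexists; split; eauto.
Qed.

Lemma high_rel_r b x y : val_rel b A x y -> is_high x -> is_high y.
Proof.
  intros H [l [w [-> Hl]]]; inversion H; subst.
  - match goal with Hx : is_true (_ <= A) |- _ => by rewrite Hx in Hl end.
  - do 2 eexists; split; eauto.
Qed.

Lemma both_high b x y : is_high x -> is_high y -> val_rel b A x y.
Proof. intros [l [w [-> Hl]]] [l' [w' [-> Hl']]]. by constructor. Qed.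

Lemma conf_rel b S1 S2 S1' S2' m1 m2 m1' m2' :
  store_rel b A S1 S2 -> heap_rel b A m1 m2 ->
  confined S1 S1' m1 m1' -> confined S2 S2' m2 m2' ->
  store_rel b A S1' S2' /\ heap_rel b A m1' m2'.
Proof.
  intros Hs [h1 [h2 h3]] [a1 [b1 c1]] [a2 [b2 c2]]; split; [|split; [|split]].
  - intros l Hl; rewrite a1 // a2 //; exact: Hs l Hl.
  - intros n k E; exact: leq_trans (h1 n k E) b1.
  - intros n k E; exact: leq_trans (h2 n k E) b2.
  - intros n k E. have Hr := h3 n k E.
    destruct (c1 n (h1 n k E)) as [E1|[H1 H1']]; destruct (c2 k (h2 n k E)) as [E2|[H2 H2']].
    + by rewrite E1 E2.
    + apply both_high; auto. rewrite E1. exact: high_rel_l Hr H2.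
    + apply both_high; auto. rewrite E2. exact: high_rel_r Hr H1.
    + by apply both_high.
Qed.

Lemma final_of_conf {X Y : Type} b (c1 : cfg X) (c2 : cfg Y) c1' c2' :
  store_rel b A (c_store c1) (c_store c2) -> heap_rel b A (c_heap c1) (c_heap c2) ->
  ~~ (c_pc c1' <= A) -> ~~ (c_pc c2' <= A) ->
  confined (c_store c1) (c_store c1') (c_heap c1) (c_heap c1') ->
  confined (c_store c2) (c_store c2') (c_heap c2) (c_heap c2') ->
  final_rel b A c1' c2'.
Proof.
  intros Hs Hh Hp1 Hp2 C1 C2. destruct (conf_rel Hs Hh C1 C2) as [Hs' Hh'].
  split; [|split]; auto.
Qed.

Lemma store_rel_supd b S1 S2 l M1 M2 : store_rel b A S1 S2 -> mem_rel b A l M1 M2 ->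
  store_rel b A (supd S1 l M1) (supd S2 l M2).
Proof. intros Hs Hm l' Hl'; unfold supd; case: eqP => E; [subst; exact: Hm|exact: Hs]. Qed.

Lemma store_rel_supd_high b S1 S2 l1 l2 M1 M2 : store_rel b A S1 S2 ->
  ~~ (l1 <= A) -> ~~ (l2 <= A) ->
  store_rel b A (supd S1 l1 M1) (supd S2 l2 M2).
Proof.
  intros Hs H1 H2 l' Hl'; unfold supd.
  case: eqP => E; [subst; by rewrite Hl' in H1|].
  case: eqP => E'; [subst; by rewrite Hl' in H2|]. exact: Hs.
Qed.

Lemma heap_write b m1 m2 n1 n2 x1 x2 : is_pbij b -> heap_rel b A m1 m2 ->
  b n1 = Some n2 -> (n1 < size m1)%N -> (n2 < size m2)%N -> val_rel b A x1 x2 ->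
  heap_rel b A (upd m1 n1 x1) (upd m2 n2 x2).
Proof.
  intros [Hinj _] [h1 [h2 h3]] E Hn1 Hn2 Hx. unfold upd; rewrite Hn1 Hn2.
  split; [|split].
  - intros p k Ep; rewrite size_set_nth; exact: leq_trans (h1 p k Ep) (leq_maxr _ _).
  - intros p k Ep; rewrite size_set_nth; exact: leq_trans (h2 p k Ep) (leq_maxr _ _).
  - intros p k Ep. rewrite !nth_set_nth' //. case: eqP => Ep1.
    + subst. rewrite E in Ep. case: Ep => ->. by rewrite eqxx.
    + case: eqP => Ek; [|exact: h3].
      subst. exfalso; apply: Ep1; exact: Hinj _ _ _ Ep E.
Qed.

Definition ext (b : pbij) (n k : nat) : pbij := fun p => if p == n then Some k else b p.

Lemma heap_alloc b m1 m2 x1 x2 : is_pbij b -> heap_rel b A m1 m2 -> val_rel b A x1 x2 ->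
  is_pbij (ext b (size m1) (size m2)) /\ pbij_incl b (ext b (size m1) (size m2)) /\
  heap_rel (ext b (size m1) (size m2)) A (upd m1 (size m1) x1) (upd m2 (size m2) x2).
Proof.
  intros [Hinj [N HN]] [h1 [h2 h3]] Hx.
  have Hi : pbij_incl b (ext b (size m1) (size m2)).
  { intros p k Ep; unfold ext. case: eqP => E; [|auto]. subst.
    have := h1 _ _ Ep. by rewrite ltnn. }
  split; [|split; [exact Hi|]].
  - split.
    + intros p1 p2 k; unfold ext. case: eqP => E1; case: eqP => E2; try congruence.
      * intros [= <-] Ep2. have := h2 _ _ Ep2. by rewrite ltnn.
      * intros Ep1 [= <-]. have := h2 _ _ Ep1. by rewrite ltnn.
      * exact: Hinj.
    + exists (maxn N (size m1).+1). intros p Hp; unfold ext.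
      rewrite geq_max in Hp. case/andP: Hp => Hp1 Hp2.
      case: eqP => E; [subst; by rewrite ltnn in Hp2|]. exact: HN.
  - unfold upd; rewrite !ltnn. split; [|split].
    + intros p k; unfold ext; rewrite size_rcons; case: eqP => E; [by subst|].
      intros Ep; exact: leqW (h1 _ _ Ep).
    + intros p k; unfold ext; rewrite size_rcons; case: eqP => E; [intros [= <-]; by []|].
      intros Ep; exact: leqW (h2 _ _ Ep).
    + intros p k; unfold ext; rewrite !nth_rcons. case: eqP => E.
      * intros [= <-]. subst. rewrite !ltnn !eqxx. exact (val_rel_mono Hi Hx).
      * intros Ep. rewrite (h1 _ _ Ep) (h2 _ _ Ep). exact (val_rel_mono Hi (h3 _ _ Ep)).
Qed.

Lemma incl_refl b : pbij_incl b b.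
Proof. by []. Qed.

Lemma incl_trans b1 b2 b3 : pbij_incl b1 b2 -> pbij_incl b2 b3 -> pbij_incl b1 b3.
Proof. intros H1 H2 n k E; auto. Qed.

Lemma low_join pc l : pc <= A -> l <= A -> pc `|` l <= A.
Proof. by rewrite leUx => -> ->. Qed.
End Proofs.

Section Main.
Context {d : Order.disp_t} {L : latticeType d} (A : L).

Ltac inv_rel := repeat match goal with
 | H : val_rel _ _ ?x ?y |- _ => tryif is_var x then fail else (inversion H; subst; clear H)
 end.

Ltac relate Hth := repeat match goal with
 | H1 : eval ?t1 ?e ?v1, H2 : eval ?t2 ?e ?v2 |- _ =>
    let Hc := fresh "Hr" in have Hc := eval_rel H1 Hth H2; clear H1 H2
 end.

Ltac fin := match goal with Hb : is_pbij ?b |- exists b', _ => exists b end;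
  split; [assumption|split; [exact: incl_refl|split; [|split]; cbn [c_pc c_store c_heap c_term]; auto]].

Lemma init_mk {X : Type} b S1 S2 m1 m2 pc (t : X) : store_rel b A S1 S2 -> heap_rel b A m1 m2 ->
  init_rel b A (Cfg S1 m1 pc t) (Cfg S2 m2 pc t).
Proof. intros; split; [|split; [|split]]; auto. Qed.

Lemma main_low :
  (forall c1 th1 c1', force c1 th1 c1' -> forall b c2 th2 c2', is_pbij b ->
     init_rel b A c1 c2 -> c_pc c1 <= A -> env_rel b A th1 th2 -> force c2 th2 c2' ->
     exists b', is_pbij b' /\ pbij_incl b b' /\ final_rel b' A c1' c2') /\
  (forall c1 th1 c1', teval c1 th1 c1' -> forall b c2 th2 c2', is_pbij b ->
     init_rel b A c1 c2 -> c_pc c1 <= A -> env_rel b A th1 th2 -> teval c2 th2 c2' ->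
     exists b', is_pbij b' /\ pbij_incl b b' /\ final_rel b' A c1' c2').
Proof.
  apply ft_ind; intros; (
  match goal with Hi : init_rel _ _ _ ?c2 |- _ =>
    let S2 := fresh "S2" in let m2 := fresh "m2" in
    destruct c2 as [S2 m2 pc2 t2]; destruct Hi as [Hs [Hh [Hpc2 Ht2]]]; simpl in *; subst;
  match goal with H : _ (Cfg S2 m2 _ _) _ _ |- _ => inversion H; subst; clear H end end);
  match goal with Hth : env_rel _ _ _ _ |- _ => relate Hth end; inv_rel.
  all: try solve [eapply H; [eassumption| | eassumption | eassumption | eassumption]; split; [|split;[|split]]; simpl; eauto].
  all: try solve [fin; match goal with |- context [?p `|` ?l] =>
     case Hl: (l <= A); [right; split; [reflexivity|split; [apply: low_join; assumption|constructor]]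
       | left; split; apply: high_join_r; by rewrite Hl] end].
  all: try solve [fin; first [ left; split; apply: high_join_r; assumption
     | right; split; [reflexivity|split; [first [assumption|apply: low_join; assumption]|first [assumption|constructor; auto]]] ]].
  - destruct (H b _ _ _ H1 (init_mk _ _ Hs Hh) H3 H4 H12) as [b1 [Hb1 [Hi1 [Hs1 [Hh1 Hd]]]]].
    simpl in *. destruct Hd as [[Hp1 Hp2]|[Ep [Hpl Hv]]].
    + exists b1; split; auto; split; auto.
      destruct (proj1 (confine A) _ _ _ f0 Hp1) as [Hq1 C1].
      destruct (proj1 (confine A) _ _ _ H13 Hp2) as [Hq2 C2]. simpl in *.
      exact: (final_of_conf (c1:=Cfg S' m' pc' e2) (c2:=Cfg S'0 m'0 pc'0 e2)) Hs1 Hh1 Hq1 Hq2 C1 C2.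
    + subst. destruct (H0 b1 _ _ _ Hb1 (init_mk _ _ Hs1 Hh1) Hpl
        (List.Forall2_cons _ _ Hv (env_rel_mono Hi1 H4)) H13) as [b2 [Hb2 [Hi2 Hf]]].
      exists b2; split; [|split]; eauto using incl_trans.
  - destruct (H b _ _ _ H0 (init_mk _ _ Hs Hh) H2 H3 H10) as [b1 [Hb1 [Hi1 [Hs1 [Hh1 Hd]]]]].
    simpl in *. exists b1; split; [|split]; auto. split; [|split]; auto. right; split; [|split]; auto.
    destruct Hd as [[Hp1 Hp2]|[Ep [Hpl Hv]]]; [exact: RLabeledHigh|subst; exact: RLabeledLow].
  - have Hm := Hs _ H5; rewrite -(F2_size Hm).
    exists b; split; [|split]; [assumption|exact: incl_refl|]; split; [|split]; cbn [c_pc c_store c_heap c_term]; auto.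
    + apply: store_rel_supd => // _. exact: F2_upd.
    + right; split; [reflexivity|split; [assumption|exact: RRefILow]].
  - exists b; split; [|split]; [assumption|exact: incl_refl|]; split; [|split]; cbn [c_pc c_store c_heap c_term]; auto.
    + exact: store_rel_supd_high.
    + right; split; [reflexivity|split; [assumption|exact: RRefIHigh]].
  - destruct (F2_nth_error (Hs _ H3) e1) as [y [Hy Hr]]. rewrite H10 in Hy. case: Hy => ?; subst.
    exists b; split; [|split]; [assumption|exact: incl_refl|]; split; [|split]; cbn [c_pc c_store c_heap c_term]; auto.
    right; split; [reflexivity|split; [exact: low_join|assumption]].
  - exists b; split; [|split]; [assumption|exact: incl_refl|]; split; [|split]; cbn [c_pc c_store c_heap c_term]; auto.
    + apply: store_rel_supd => // _. exact: F2_upd (Hs _ H3) H8.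
    + right; split; [reflexivity|split; [assumption|constructor]].
  all: try solve [exfalso; match goal with Hn: is_true (~~ (?x <= A)), Hle : is_true (?x <= ?y),
      Hy : is_true (?y <= A) |- _ => by rewrite (le_trans Hle Hy) in Hn end].
  all: try solve [exists b; split; [|split]; [assumption|exact: incl_refl|]; split; [|split];
    cbn [c_pc c_store c_heap c_term]; auto;
    [exact: store_rel_supd_high | right; split; [reflexivity|split; [assumption|constructor]]]].
  - destruct (heap_alloc (x1:=VLabeled l0 v) (x2:=VLabeled l0 v0) H Hh (RLabeledLow H5 H7)) as [Hb' [Hi' Hh']].
    eexists; split; [eassumption|split; [eassumption|]]. split; [|split]; cbn [c_pc c_store c_heap c_term]; auto.
    + exact: store_rel_mono Hi' Hs.
    + right; split; [reflexivity|split;[assumption| apply RRefS; unfold ext; by rewrite eqxx]].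
  - destruct (heap_alloc (x1:=VLabeled l v) (x2:=VLabeled l0 v0) H Hh (@RLabeledHigh _ _ b A l l0 v v0 ltac:(assumption) ltac:(assumption))) as [Hb' [Hi' Hh']].
    eexists; split; [eassumption|split; [eassumption|]]. split; [|split]; cbn [c_pc c_store c_heap c_term]; auto.
    + exact: store_rel_mono Hi' Hs.
    + right; split; [reflexivity|split;[assumption| apply RRefS; unfold ext; by rewrite eqxx]].
  all: try (match goal with Hbn : ?b ?n = Some ?k, E1 : List.nth_error ?m ?n = Some _,
     E2 : List.nth_error ?m2 ?k = Some _, Hh : heap_rel ?b _ ?m ?m2 |- _ =>
     have Hr := proj2 (proj2 Hh) _ _ Hbn;
     rewrite (proj1 (nth_error_nth VUnit E1)) (proj1 (nth_error_nth VUnit E2)) in Hr end; inv_rel).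
  all: try solve [fin; first [ left; split; apply: high_join_r; assumption
     | right; split; [reflexivity|split; [first [assumption|apply: low_join; assumption]|first [assumption|constructor; auto]]] ]].
  all: match goal with Hbn : ?b ?n = Some ?k, E1 : List.nth_error ?m ?n = Some _,
     E2 : List.nth_error ?m2 ?k = Some _, Hh : heap_rel ?b _ ?m ?m2, Hb : is_pbij ?b |- _ =>
    exists b; split; [|split]; [assumption|exact: incl_refl|]; split; [|split]; cbn [c_pc c_store c_heap c_term]; auto;
    [ apply: (heap_write Hb Hh Hbn (proj2 (nth_error_nth VUnit E1)) (proj2 (nth_error_nth VUnit E2)));
      first [ apply: RLabeledLow; [apply: low_join; assumption|assumption]
            | apply: RLabeledHigh; apply: high_join_r; assumption ]
    | right; split; [reflexivity|split;[assumption|constructor]] ] end.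
Qed.
End Main.

Theorem mainTheorem4 (d : Order.disp_t) (L : latticeType d) (A : L) :
  (forall (b : pbij) (c1 c2 : cfg expr) (th1 th2 : env) (c1' c2' : cfg value),
      is_pbij b -> valid_cfg c1 th1 -> valid_cfg c2 th2 ->
      init_rel b A c1 c2 -> env_rel b A th1 th2 ->
      force c1 th1 c1' -> force c2 th2 c2' ->
      exists b' : pbij, is_pbij b' /\ pbij_incl b b' /\ final_rel b' A c1' c2') /\
  (forall (b : pbij) (c1 c2 : cfg thunk) (th1 th2 : env) (c1' c2' : cfg value),
      is_pbij b -> valid_cfg c1 th1 -> valid_cfg c2 th2 ->
      init_rel b A c1 c2 -> env_rel b A th1 th2 ->
      teval c1 th1 c1' -> teval c2 th2 c2' ->
      exists b' : pbij, is_pbij b' /\ pbij_incl b b' /\ final_rel b' A c1' c2').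
Proof.
  split.
  - intros b c1 c2 th1 th2 c1' c2' Hb _ _ Hi Hth H1 H2.
    case Hp: (c_pc c1 <= A).
    + exact: (proj1 (main_low A)) H1 b c2 th2 c2' Hb Hi Hp Hth H2.
    + have Hp1 : ~~ (c_pc c1 <= A) by rewrite Hp.
      destruct Hi as [Hs [Hh [Ep _]]].
      have Hp2 : ~~ (c_pc c2 <= A) by rewrite -Ep.
      destruct (proj1 (confine A) _ _ _ H1 Hp1) as [Hq1 C1].
      destruct (proj1 (confine A) _ _ _ H2 Hp2) as [Hq2 C2].
      exists b; split; [|split]; [assumption|exact: incl_refl|].
      exact: final_of_conf Hs Hh Hq1 Hq2 C1 C2.
  - intros b c1 c2 th1 th2 c1' c2' Hb _ _ Hi Hth H1 H2.
    case Hp: (c_pc c1 <= A).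
    + exact: (proj2 (main_low A)) H1 b c2 th2 c2' Hb Hi Hp Hth H2.
    + have Hp1 : ~~ (c_pc c1 <= A) by rewrite Hp.
      destruct Hi as [Hs [Hh [Ep _]]].
      have Hp2 : ~~ (c_pc c2 <= A) by rewrite -Ep.
      destruct (proj2 (confine A) _ _ _ H1 Hp1) as [Hq1 C1].
      destruct (proj2 (confine A) _ _ _ H2 Hp2) as [Hq2 C2].
      exists b; split; [|split]; [assumption|exact: incl_refl|].
      exact: final_of_conf Hs Hh Hq1 Hq2 C1 C2.
Qed.
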